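(* Let $\mathbf{x}=(\mathbf{x}_1,\mathbf{x}_2,\mathbf{x}_3)$ have i.i.d. Bernoulli$(0.5)$ coordinates, and let $\mathbf{y}$ be distributed as follows: if $\mathbf{x}_3=1$, $\mathbf{y}=\mathbf{x}_1$ with probability $0.9$ and $1-\mathbf{x}_1$ otherwise; if $\mathbf{x}_3=0$, $\mathbf{y}=\mathbf{x}_2$ with probability $0.9$ and $1-\mathbf{x}_2$ otherwise. Let $e_{\mathrm{encode}}(\mathbf{x})=\xi_1=[1,0,0]$ if $\mathbf{x}_3=1$ and $\xi_2=[0,1,0]$ otherwise, and let $e_{\mathbf{c}}(\mathbf{x})=\xi_3=[0,0,1]$ for all $\mathbf{x}$. Then $\mathrm{EVAL\text{-}X}(q,e_{\mathrm{encode}})>\mathrm{EVAL\text{-}X}(q,e_{\mathbf{c}})$.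
   Context: $q$ denotes the joint distribution of $(\mathbf{y},\mathbf{x})$ just described. An explanation is a map $e$ from inputs to selection masks in $\{0,1\}^3$; $\mathbf{x}_{\mathbf{v}}$ denotes the values of the coordinates selected by $\mathbf{v}$, and $\mathbf{x}_{e(\mathbf{x})}=(\mathbf{v},\mathbf{a})$ is the pair of selection and selected values. The EVAL-X score is $\mathrm{EVAL\text{-}X}(q,e)=\mathbb{E}_{(\mathbf{v},\mathbf{a})\sim q(\mathbf{x}_{e(\mathbf{x})})}\mathbb{E}_{\mathbf{y}\sim q(\mathbf{y}\mid \mathbf{x}_{e(\mathbf{x})}=(\mathbf{v},\mathbf{a}))}[\log q(\mathbf{y}\mid \mathbf{x}_{\mathbf{v}}=\mathbf{a})]$. *)

(* Defs.v *)
From HB Require Import structures.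
From mathcomp Require Import all_boot all_order all_algebra.
From mathcomp Require Import reals exp.
Set Implicit Arguments. Unset Strict Implicit. Unset Printing Implicit Defensive.
Import Order.TTheory GRing.Theory Num.Theory.
Local Open Scope ring_scope.

(* Inputs x = (x_1,x_2,x_3) are indexed by 'I_3 (index 0 = x_1, 1 = x_2, 2 = x_3). *)
Definition input := {ffun 'I_3 -> bool}.
Definition mask := {ffun 'I_3 -> bool}.

Definition x1 : 'I_3 := @Ordinal 3 0 isT.
Definition x2 : 'I_3 := @Ordinal 3 1 isT.
Definition x3 : 'I_3 := @Ordinal 3 2 isT.

Section Model.
Variable R : realType.

Definition qx (x : input) : R := (1 / 2) ^+ 3.

Definition qyx (x : input) (y : bool) : R :=
  let z := if x x3 then x x1 else x x2 in
  if y == z then 9 / 10 else 1 / 10.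

Definition qjoint (y : bool) (x : input) : R := qx x * qyx x y.

(* The selected values x_v, canonically encoded as an element of {0,1}^3
   with unselected coordinates set to false; x_v = a means restrict v x = a. *)
Definition restrict (v : mask) (x : input) : input := [ffun i => v i && x i].

Definition qcond (v : mask) (a : input) (y : bool) : R :=
  (\sum_(x : input | restrict v x == a) qjoint y x) /
  (\sum_(x : input | restrict v x == a) qx x).

Definition sel_event (e : input -> mask) (v : mask) (a : input) (x : input) : bool :=
  (e x == v) && (restrict v x == a).

Definition qsel (e : input -> mask) (v : mask) (a : input) : R :=
  \sum_(x : input | sel_event e v a x) qx x.

Definition qcond_sel (e : input -> mask) (v : mask) (a : input) (y : bool) : R :=
  (\sum_(x : input | sel_event e v a x) qjoint y x) / qsel e v a.

Definition evalx (e : input -> mask) : R :=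
  \sum_(v : mask) \sum_(a : input)
    qsel e v a * \sum_(y : bool) qcond_sel e v a y * ln (qcond v a y).

End Model.

Definition xi1 : mask := [ffun i : 'I_3 => i == x1].
Definition xi2 : mask := [ffun i : 'I_3 => i == x2].
Definition xi3 : mask := [ffun i : 'I_3 => i == x3].

Definition e_encode (x : input) : mask := if x x3 then xi1 else xi2.
Definition e_c (x : input) : mask := xi3.

(* Main.v *)
Require Import Defs.
From HB Require Import structures.
From mathcomp Require Import all_boot all_order all_algebra.
From mathcomp Require Import reals exp.
From mathcomp Require Import ring lra.
Import Order.TTheory GRing.Theory Num.Theory.
Local Open Scope ring_scope.

Definition mk (b1 b2 b3 : bool) : input :=
  [ffun i : 'I_3 => if val i == 0%N then b1 else if val i == 1%N then b2 else b3].

Lemma mkK (f : input) : mk (f x1) (f x2) (f x3) = f.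
Proof.
apply/ffunP => -[[|[|[|n]]] Hi]; rewrite ffunE /=.
- by congr (f _); apply/val_inj.
- by congr (f _); apply/val_inj.
- by congr (f _); apply/val_inj.
- by [].
Qed.

Lemma sum_input (R : realType) (P : pred input) (F : input -> R) :
  \sum_(x : input | P x) F x =
  \sum_(b1 : bool) \sum_(b2 : bool) \sum_(b3 : bool)
     (if P (mk b1 b2 b3) then F (mk b1 b2 b3) else 0).
Proof.
rewrite big_mkcond.
rewrite (reindex (fun p : bool * bool * bool => mk p.1.1 p.1.2 p.2)) /=; last first.
  exists (fun f : input => (f x1, f x2, f x3)) => [[[a b] c]|f] _ /=.
  - by rewrite !ffunE.
  - exact: mkK.
by rewrite pair_big /= pair_big /=.
Qed.

Lemma eq_input (f g : input) : (f == g) = [&& f x1 == g x1, f x2 == g x2 & f x3 == g x3].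
Proof.
apply/eqP/and3P => [->|[/eqP h1 /eqP h2 /eqP h3]]; first by rewrite !eqxx.
by rewrite -(mkK f) -(mkK g) h1 h2 h3.
Qed.

Lemma qsel_c (R : realType) b1 b2 b3 c1 c2 c3 :
  qsel R e_c (mk b1 b2 b3) (mk c1 c2 c3) = if [&& ~~b1, ~~b2, b3, ~~c1 & ~~c2] then 1/2 else 0.
Proof.
rewrite /qsel sum_input !big_bool /sel_event /e_c /restrict /qx.
rewrite !eq_input !ffunE /=.
by case: b1 b2 b3 c1 c2 c3 => [] [] [] [] [] [] /=; rewrite ?(addr0, add0r); lra.
Qed.

Lemma key (R : realType) : ln (1/2 : R) < 9/10 * ln (7/10) + 1/10 * ln (3/10).
Proof.
have h1 : (0 : R) < 7/10 by lra.
have h2 : (0 : R) < 3/10 by lra.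
have h3 : (0 : R) < 1/2 by lra.
have E1 : ln ((7/10 : R) ^+ 9 * (3/10)) = 9 * ln (7/10) + ln (3/10).
  rewrite lnM ?lnXn ?mulr_natl ?posrE ?exprn_gt0. all: try lra.
have E2 : ln ((1/2 : R) ^+ 10) = 10 * ln (1/2) by rewrite lnXn ?mulr_natl.
have : ln ((1/2 : R) ^+ 10) < ln ((7/10 : R) ^+ 9 * (3/10)).
  rewrite ltr_ln ?posrE; try (rewrite ?exprS ?expr0; lra).
rewrite E1 E2 => H. lra.
Qed.
Ltac crunch := rewrite ?(addr0, add0r, mulr0, mul0r); try lra; field.

Lemma qsel_enc (R : realType) b1 b2 b3 c1 c2 c3 :
  qsel R e_encode (mk b1 b2 b3) (mk c1 c2 c3) =
  if [&& b1, ~~b2, ~~b3, ~~c2 & ~~c3] || [&& ~~b1, b2, ~~b3, ~~c1 & ~~c3] then 1/4 else 0.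
Proof.
rewrite /qsel sum_input !big_bool /sel_event /e_encode /restrict /qx.
rewrite !eq_input !ffunE /=.
by case: b1 b2 b3 c1 c2 c3 => [] [] [] [] [] [] /=; rewrite ?(addr0, add0r); lra.
Qed.

Lemma qcs_c (R : realType) c y :
  qcond_sel R e_c (mk false false true) (mk false false c) y = 1/2.
Proof.
rewrite /qcond_sel qsel_c /= /qjoint /qx /qyx /sel_event sum_input !big_bool /e_c /restrict.
rewrite !eq_input !ffunE /=.
by case: c y => [] [] /=; crunch.
Qed.

Lemma qc_c (R : realType) c y :
  qcond R (mk false false true) (mk false false c) y = 1/2.
Proof.
rewrite /qcond /qjoint /qx /qyx !sum_input !big_bool /restrict.
rewrite !eq_input !ffunE /=.
by case: c y => [] [] /=; crunch.
Qed.

Lemma qcs_1 (R : realType) c y :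
  qcond_sel R e_encode (mk true false false) (mk c false false) y = if y == c then 9/10 else 1/10.
Proof.
rewrite /qcond_sel qsel_enc /= /qjoint /qx /qyx /sel_event sum_input !big_bool /e_encode /restrict.
rewrite !eq_input !ffunE /=.
by case: c y => [] [] /=; crunch.
Qed.

Lemma qcs_2 (R : realType) c y :
  qcond_sel R e_encode (mk false true false) (mk false c false) y = if y == c then 9/10 else 1/10.
Proof.
rewrite /qcond_sel qsel_enc /= /qjoint /qx /qyx /sel_event sum_input !big_bool /e_encode /restrict.
rewrite !eq_input !ffunE /=.
by case: c y => [] [] /=; crunch.
Qed.

Lemma qc_1 (R : realType) c y :
  qcond R (mk true false false) (mk c false false) y = if y == c then 7/10 else 3/10.
Proof.
rewrite /qcond /qjoint /qx /qyx !sum_input !big_bool /restrict.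
rewrite !eq_input !ffunE /=.
by case: c y => [] [] /=; crunch.
Qed.

Lemma qc_2 (R : realType) c y :
  qcond R (mk false true false) (mk false c false) y = if y == c then 7/10 else 3/10.
Proof.
rewrite /qcond /qjoint /qx /qyx !sum_input !big_bool /restrict.
rewrite !eq_input !ffunE /=.
by case: c y => [] [] /=; crunch.
Qed.

Lemma sum_input' (R : realType) (F : input -> R) :
  \sum_(x : input) F x = \sum_(b1 : bool) \sum_(b2 : bool) \sum_(b3 : bool) F (mk b1 b2 b3).
Proof. by rewrite (@sum_input R xpredT). Qed.

Arguments mk : simpl never.

Definition T (R : realType) e v a := qsel R e v a * \sum_(y : bool) qcond_sel R e v a y * ln (qcond R v a y).

Lemma T_c (R : realType) b1 b2 b3 c1 c2 c3 :
  T R e_c (mk b1 b2 b3) (mk c1 c2 c3) =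
  if [&& ~~b1, ~~b2, b3, ~~c1 & ~~c2] then 1/2 * ln (1/2) else 0.
Proof.
rewrite /T qsel_c big_bool; move: b1 b2 b3 c1 c2 => [] [] [] [] [] /=; rewrite ?mul0r //.
rewrite !qcs_c !qc_c. lra.
Qed.

Lemma evalx_c (R : realType) : evalx R e_c = 1/2 * ln (1/2) + 1/2 * ln (1/2).
Proof.
have -> : evalx R e_c = \sum_(v : Defs.mask) \sum_(a : input) T R e_c v a by [].
rewrite sum_input' !big_bool !sum_input' !big_bool !T_c /=; try lra.
Qed.


Lemma T_e (R : realType) b1 b2 b3 c1 c2 c3 :
  T R e_encode (mk b1 b2 b3) (mk c1 c2 c3) =
  if [&& b1, ~~b2, ~~b3, ~~c2 & ~~c3] || [&& ~~b1, b2, ~~b3, ~~c1 & ~~c3]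
  then 1/4 * (9/10 * ln (7/10) + 1/10 * ln (3/10)) else 0.
Proof.
rewrite /T qsel_enc big_bool; move: b1 b2 b3 c1 c2 c3 => [] [] [] [] [] [] /=; rewrite ?mul0r //.
all: rewrite ?qcs_1 ?qc_1 ?qcs_2 ?qc_2 /=; lra.
Qed.

Lemma evalx_e (R : realType) : evalx R e_encode = 9/10 * ln (7/10) + 1/10 * ln (3/10).
Proof.
have -> : evalx R e_encode = \sum_(v : Defs.mask) \sum_(a : input) T R e_encode v a by [].
rewrite sum_input' !big_bool !sum_input' !big_bool !T_e /=; try lra.
Qed.

Theorem proposition2 (R : realType) : evalx R e_encode > evalx R e_c.
Proof.
rewrite evalx_e evalx_c; have := key R; lra.
Qed.
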